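(* Let $1\le n\le L$. If $q_i=0$ for all $i=1,\dots,n$, then $$Z_{L,n}=(p_1\cdots p_n)^{L-n}\,h_{L-n}\!\left(\frac{1}{p_1},\dots,\frac{1}{p_n}\right),$$ where $h_m(x_1,\dots,x_n)=\sum_{1\le i_1\le\cdots\le i_m\le n}x_{i_1}\cdots x_{i_m}$ is the complete homogeneous symmetric polynomial of degree $m$.
   Context: Particle labels are taken modulo $n$. $\Omega_{L,n}$ is the set of words $w_1\cdots w_L$ on the ring $\mathbb{Z}/L\mathbb{Z}$ over the alphabet $\{\bullet_1,\dots,\bullet_n,\Box_1,\dots,\Box_n\}$ in which each $\bullet_k$ occurs exactly once, the $\bullet_1,\dots,\bullet_n$ appear in this cyclic order, and the remaining $L-n$ letters are arbitrary $\Box_i$'s. For $w\in\Omega_{L,n}$ let $b_k$ be the position of $\bullet_k$ and $C_k$ the set of positions strictly between $b_k$ and $b_{k+1}$ going cyclically forward ($b_{n+1}=b_1$). For $i,k\in\{1,\dots,n\}$ set $w_\Box(i,k)=p_1\cdots p_{i-1}q_{i+1}\cdots q_kp_{k+1}\cdots p_n$ if $i\le k$ and $w_\Box(i,k)=q_1\cdots q_kp_{k+1}\cdots p_{i-1}q_{i+1}\cdots q_n$ if $k<i$ (empty products are $1$). The weight is $\mathrm{wt}(w)=\prod_{k=1}^n\prod_{j\in C_k}w_\Box(i_j,k)$ where $w_j=\Box_{i_j}$. The restricted partition function is the polynomial $Z_{L,n}=\sum\mathrm{wt}(w)$, summed over $w\in\Omega_{L,n}$ with $w_1=\bullet_1$;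 the claim concerns its specialization at $q_1=\cdots=q_n=0$. *)

(* Defs.v *)
(* Positions 1..L of the paper are 'I_L (paper position j+1 = j),
   particle labels 1..n are 'I_n (paper label k+1 = k). *)
From mathcomp Require Import all_boot all_order all_algebra.
Set Implicit Arguments. Unset Strict Implicit. Unset Printing Implicit Defensive.
Import Order.TTheory GRing.Theory Num.Theory.
Local Open Scope ring_scope.

(* A letter: (true, k) = bullet_k, (false, i) = box_i. *)
Definition letter (n : nat) := (bool * 'I_n)%type.
Definition word (L n : nat) := {ffun 'I_L -> letter n}.

Section Defs.
Variables (L n : nat).

(* position (as a nat in [0, L)) of bullet_k; meaningful when it occurs once *)
Definition bpos (w : word L n) (k : 'I_n) : nat :=
  odflt 0%N (omap (@nat_of_ord L) [pick j | w j == (true, k)]).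

Definition bullets_once (w : word L n) : bool :=
  [forall k : 'I_n, #|[set j : 'I_L | w j == (true, k)]| == 1%N].

(* bullets appear in cyclic order bullet_1, ..., bullet_n: their cyclic
   offsets from bullet_1 are strictly increasing *)
Definition b1pos (w : word L n) : nat :=
  odflt 0%N (omap (bpos w) [pick k0 : 'I_n | val k0 == 0%N]).

Definition cyc_off (w : word L n) (k : 'I_n) : nat :=
  ((bpos w k + L - b1pos w) %% L)%N.

Definition cyclic_order (w : word L n) : bool :=
  [forall k : 'I_n, forall k' : 'I_n, (k < k')%N ==> (cyc_off w k < cyc_off w k')%N].

Definition Omega (w : word L n) : bool := bullets_once w && cyclic_order w.

Definition starts_bullet1 (w : word L n) : bool :=
  [forall j : 'I_L, (val j == 0%N) ==> ((w j).1 && (val (w j).2 == 0%N))].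

Definition nextb (w : word L n) (k : 'I_n) : nat :=
  odflt 0%N (omap (bpos w) [pick k' : 'I_n | val k' == ((k.+1) %% n)%N]).

(* cyclic forward distance from b_k to b_{k+1}; equals L when b_{k+1} = b_k (n = 1) *)
Definition gap (w : word L n) (k : 'I_n) : nat :=
  (((nextb w k + L - bpos w k).-1 %% L).+1)%N.

(* C_k : positions strictly between b_k and b_{k+1} going cyclically forward *)
Definition Cset (w : word L n) (k : 'I_n) : {set 'I_L} :=
  [set j : 'I_L | (0 < (j + L - bpos w k) %% L < gap w k)%N].

Variable R : comRingType.
Variables p q : 'I_n -> R.

Definition wbox (i k : 'I_n) : R :=
  \prod_(j < n | j != i)
     (if (i <= k)%N then (if (i < j)%N && (j <= k)%N then q j else p j)
      else (if (j <= k)%N || (i < j)%N then q j else p j)).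

Definition wt (w : word L n) : R :=
  \prod_(k < n) \prod_(j in Cset w k) wbox (w j).2 k.

Definition Zpart : R :=
  \sum_(w : word L n | Omega w && starts_bullet1 w) wt w.

End Defs.

Definition hcompl (R : comRingType) (n m : nat) (x : 'I_n -> R) : R :=
  \sum_(s : m.-tuple 'I_n | sorted leq (map (@nat_of_ord n) s)) \prod_(i <- s) x i.

(* Main.v *)
Require Import Defs.
From mathcomp Require Import all_boot all_order all_algebra.
From mathcomp Require Import zify.
Import GRing.Theory.
Set Implicit Arguments. Unset Strict Implicit. Unset Printing Implicit Defensive.

Section Gen.
Variables L n : nat.

Definition lab (B : nat -> nat) (j : nat) : nat := count (fun k => B k <= j) (iota 1 n).
Definition wordB (B : nat -> nat) : word L n.+1 :=
  [ffun j : 'I_L => (nat_of_ord j == B (lab B j), inord (lab B j))].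
Definition incB (B : nat -> nat) := forall k k', k < k' -> k' <= n -> B k < B k'.
Definition nb (B : nat -> nat) k := if k < n then B k.+1 else L.

Lemma inc_le B k k' : incB B -> k <= k' -> k' <= n -> B k <= B k'.
Proof.
move=> hB; rewrite leq_eqVlt => /orP[/eqP -> //|lt] le.
exact: ltnW (hB _ _ lt le).
Qed.

Lemma count_le_iota k : k <= n -> count (fun x => x <= k) (iota 1 n) = k.
Proof.
move=> kn; rewrite -(subnKC kn) iotaD count_cat.
rewrite (@eq_in_count _ _ predT (iota 1 k)); last first.
  by move=> x; rewrite mem_iota => /andP[_ ]; rewrite add1n ltnS.
rewrite (@eq_in_count _ _ pred0 (iota (1 + k) _)); last first.
  by move=> x; rewrite mem_iota => /andP[h _] /=; apply/negbTE; rewrite -ltnNge.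
by rewrite count_predT count_pred0 size_iota addn0.
Qed.

Lemma lab_eq B j k : incB B -> k <= n -> B k <= j -> (k < n -> j < B k.+1) ->
  lab B j = k.
Proof.
move=> hB kn Bkj hn; rewrite /lab -(count_le_iota kn).
apply: eq_in_count => x; rewrite mem_iota add1n ltnS => /andP[x1 xn].
case: (leqP x k) => xk.
  by apply/idP; apply: leq_trans Bkj; apply: inc_le.
apply/negbTE; rewrite -ltnNge; have kn' : k < n by apply: leq_trans xk xn.
by apply: leq_trans (hn kn') _; apply: inc_le.
Qed.

Lemma lab_ex B j : incB B -> B 0 = 0 ->
  exists k, [/\ k <= n, B k <= j & (k < n -> j < B k.+1)].
Proof.
move=> hB B0.
suff H : forall t, t <= n -> exists k, [/\ k <= t, B k <= j & (k < t -> j < B k.+1)].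
  by have [k [? ? ?]] := H n (leqnn n); exists k; split.
elim=> [|t IH] Ht; first by exists 0; rewrite B0.
case: (leqP (B t.+1) j) => h; first by exists t.+1; split => //; rewrite ltnn.
have [k [kt Bk H]] := IH (ltnW Ht); exists k; split => //; first exact: leqW.
move=> _; move: kt; rewrite leq_eqVlt => /orP[/eqP -> //|]; exact: H.
Qed.

Lemma labB B k : incB B -> k <= n -> lab B (B k) = k.
Proof. by move=> hB kn; apply: lab_eq => // kn'; apply: hB. Qed.

Lemma lab_le B j : lab B j <= n.
Proof. by rewrite /lab; apply: leq_trans (count_size _ _) _; rewrite size_iota. Qed.

Lemma wordB_true B (j : 'I_L) (k : 'I_n.+1) : incB B ->
  (wordB B j == (true, k)) = (nat_of_ord j == B k).
Proof.
move=> hB; rewrite ffunE; apply/idP/idP.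
  case/eqP => ej ek; have : nat_of_ord k = lab B j.
    by rewrite -ek inordK // ltnS lab_le.
  by move=> ->.
move/eqP => ej; rewrite ej labB //; last by rewrite -ltnS.
by rewrite eqxx inord_val.
Qed.

Lemma wordB_ext B1 B2 : (forall k, k <= n -> B1 k = B2 k) -> wordB B1 = wordB B2.
Proof.
move=> e; have el : forall j, lab B1 j = lab B2 j.
  move=> j; apply: eq_in_count => x; rewrite mem_iota add1n ltnS => /andP[_ xn].
  by rewrite e.
by apply/ffunP => j; rewrite !ffunE el e // lab_le.
Qed.

End Gen.

Section Valid.
Variables L n : nat.
Variable w : word L n.+1.
Hypothesis bo : bullets_once w.

Lemma bpos_spec (j : 'I_L) (k : 'I_n.+1) : w j = (true, k) -> nat_of_ord j = bpos w k.
Proof.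
move=> hj; move/forallP/(_ k)/cards1P: bo => [x Hx].
rewrite /bpos; case: pickP => [j0 /eqP Hj0 | H] /=.
  have : j0 \in [set j | w j == (true, k)] by rewrite inE Hj0.
  have : j \in [set j | w j == (true, k)] by rewrite inE hj.
  by rewrite Hx !inE => /eqP -> /eqP ->.
by have := H j; rewrite hj eqxx.
Qed.

Lemma bpos_ex (k : 'I_n.+1) : exists j : 'I_L, w j = (true, k).
Proof.
move/forallP/(_ k)/cards1P: bo => [x Hx].
have : x \in [set j | w j == (true, k)] by rewrite Hx inE.
by rewrite inE => /eqP hx; exists x.
Qed.

Lemma bpos_lt k : bpos w k < L.
Proof. by have [j hj] := bpos_ex k; rewrite -(bpos_spec hj). Qed.

Lemma L_gt0 : 0 < L.
Proof. by have [j _] := bpos_ex ord0; apply: leq_ltn_trans (ltn_ord j). Qed.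

Hypothesis st : starts_bullet1 w.

Lemma bpos0 : bpos w ord0 = 0.
Proof.
have /= := forallP st (Ordinal L_gt0).
case E: (w _) => [b k] /= /andP[hb k0].
have e : k = ord0 by apply: val_inj; apply/eqP.
rewrite e in E; move: E; case: b hb => // _ E.
by rewrite -(bpos_spec E).
Qed.

Lemma b1pos0 : b1pos w = 0.
Proof.
rewrite /b1pos; case: pickP => [k0 /eqP Hk0|H] /=.
  have -> : k0 = ord0 by apply: val_inj; exact: Hk0.
  exact: bpos0.
by have := H ord0.
Qed.

Lemma cyc_offE k : cyc_off w k = bpos w k.
Proof. by rewrite /cyc_off b1pos0 subn0 modnDr modn_small // bpos_lt. Qed.

Definition Bw k := bpos w (inord k).

Lemma BwE (k : 'I_n.+1) : Bw k = bpos w k.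
Proof. by rewrite /Bw inord_val. Qed.

Lemma Bw0 : Bw 0 = 0.
Proof. rewrite /Bw (_ : inord 0 = ord0) ?bpos0 //; apply: val_inj; by rewrite /= inordK. Qed.

Lemma Bw_lt k : Bw k < L.
Proof. exact: bpos_lt. Qed.

Hypothesis co : cyclic_order w.

Lemma Bw_inc : incB n Bw.
Proof.
move=> k k' kk' k'n.
have := forallP (forallP co (inord k)) (inord k').
rewrite !cyc_offE !inordK //; last by apply: leq_ltn_trans (ltnW kk') _.
by move/implyP; apply.
Qed.

Lemma nextbE (k : 'I_n.+1) : nextb w k = if k < n then Bw k.+1 else 0.
Proof.
rewrite /nextb; case: pickP => [k' /eqP Hk' | H] /=.
  case: ifP => kn.
    rewrite modn_small // in Hk'; rewrite /Bw; congr bpos; apply: val_inj.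
    by rewrite /= inordK.
  have kn' : nat_of_ord k = n by have := ltn_ord k; rewrite ltnS leq_eqVlt kn orbF => /eqP.
  rewrite kn' modnn in Hk'; rewrite -bpos0; congr bpos; exact: val_inj.
have := H (inord ((k.+1) %% n.+1)).
by rewrite /= inordK ?eqxx // ltn_pmod.
Qed.

Lemma nb_le k : nb L n Bw k <= L.
Proof. by rewrite /nb; case: ifP => // _; apply: ltnW (Bw_lt _). Qed.

Lemma nb_gt (k : 'I_n.+1) : Bw k < nb L n Bw k.
Proof.
rewrite /nb; case: ifP => kn; last exact: Bw_lt.
by apply: Bw_inc.
Qed.

Lemma gapE (k : 'I_n.+1) : gap w k = nb L n Bw k - Bw k.
Proof.
have h1 := nb_gt k; have h2 := nb_le k.
rewrite /gap nextbE -BwE /nb; case: ifP => kn.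
  rewrite /nb kn in h1 h2.
  have -> : (Bw k.+1 + L - Bw k).-1 = (Bw k.+1 - Bw k).-1 + L by lia.
  by rewrite modnDr modn_small; lia.
rewrite /nb kn in h1 h2.
have -> : (0 + L - Bw k).-1 = (L - Bw k).-1 by [].
by rewrite modn_small; lia.
Qed.

Lemma CsetE (k : 'I_n.+1) (j : 'I_L) :
  (j \in Cset w k) = (Bw k < j < nb L n Bw k).
Proof.
have h1 := nb_gt k; have h2 := nb_le k; have h3 := ltn_ord j.
rewrite inE gapE -BwE.
case: (leqP (Bw k) j) => h.
  have -> : j + L - Bw k = (j - Bw k) + L by lia.
  rewrite modnDr modn_small; last by lia.
  apply/andP/andP; case=> a b; split; lia.
rewrite modn_small; last by lia.
have -> : (Bw k < j) = false by apply/negbTE; rewrite -leqNgt ltnW.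
by rewrite andFb; apply/negbTE/negP => /andP[_ H]; lia.
Qed.

Lemma good_word :
  (forall (k : 'I_n.+1) j, j \in Cset w k -> (w j).2 = k) -> w = wordB L n Bw.
Proof.
move=> hC; apply/ffunP => j; rewrite ffunE.
have [k [kn Bkj Hnext]] := lab_ex j Bw_inc Bw0.
rewrite (lab_eq Bw_inc kn Bkj Hnext).
have kn' : k < n.+1 by [].
case: (eqVneq (nat_of_ord j) (Bw k)) => ej.
  have [j' Hj'] := bpos_ex (inord k).
  have := bpos_spec Hj'; rewrite -/(Bw k) -ej => /val_inj ej'; subst j'.
  by rewrite Hj'.
have hj : j \in Cset w (inord k).
  rewrite CsetE inordK // /Bw.
  rewrite ltn_neqAle eq_sym ej Bkj /= /nb; case: ifP => // kn''; exact: Hnext.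
have e2 := hC _ _ hj.
case E: (w j) e2 => [[] l] /= e2.
  by move: ej; rewrite (bpos_spec E) e2 /Bw eqxx.
by rewrite e2.
Qed.

End Valid.

Lemma card_ord_pred L (P : pred nat) : #|[pred j : 'I_L | P j]| = count P (iota 0 L).
Proof.
rewrite -sum1_card (eq_bigl (fun j : 'I_L => P j)) //.
by rewrite -(big_mkord (fun i => P i) (fun _ => 1)) /index_iota subn0 sum1_count.
Qed.

Lemma count_iota_int a b L : a < b -> b <= L ->
  count (fun i => a < i < b) (iota 0 L) = b - a.+1.
Proof.
move=> ab bL.
have -> : L = a.+1 + ((b - a.+1) + (L - b)) by lia.
rewrite !iotaD !count_cat.
rewrite (@eq_in_count _ _ pred0 (iota 0 a.+1)); last first.
  move=> x; rewrite mem_iota => /andP[_ h]; apply/negbTE/negP => /andP[h1 h2]; lia.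
rewrite (@eq_in_count _ _ predT (iota (0 + a.+1) _)); last first.
  move=> x; rewrite mem_iota => /andP[h1 h2].
  have -> : a < x < b by apply/andP; split; lia.
  by [].
rewrite (@eq_in_count _ _ pred0 (iota (0 + a.+1 + _) _)); last first.
  move=> x; rewrite mem_iota => /andP[h1 h2]; apply/negbTE/negP => /andP[_ h]; lia.
by rewrite !count_pred0 count_predT size_iota add0n addn0.
Qed.

Section Forward.
Variables L n : nat.
Variable B : nat -> nat.
Hypotheses (hB : incB n B) (B0 : B 0 = 0) (BnL : B n < L).
Local Notation W := (wordB L n B).

Lemma B_lt k : k <= n -> B k < L.
Proof. by move=> kn; apply: (leq_ltn_trans _ BnL); apply: (inc_le hB). Qed.

Lemma W_bo : bullets_once W.
Proof.
apply/forallP => k; apply/cards1P; exists (Ordinal (B_lt (ltn_ord k))).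
by apply/setP => j; rewrite !inE wordB_true.
Qed.

Lemma W_bpos k : bpos W k = B k.
Proof.
have h : W (Ordinal (B_lt (ltn_ord k))) = (true, k) by apply/eqP; rewrite wordB_true.
by rewrite -(bpos_spec W_bo h).
Qed.

Lemma W_st : starts_bullet1 W.
Proof.
apply/forallP => j; apply/implyP => /eqP j0; rewrite ffunE j0.
have -> : lab n B 0 = 0 by rewrite -{1}B0 labB.
by rewrite B0 /= inordK.
Qed.

Lemma W_co : cyclic_order W.
Proof.
apply/forallP => k; apply/forallP => k'; apply/implyP => kk'.
rewrite !(cyc_offE W_bo W_st) !W_bpos; apply: hB => //.
by rewrite -ltnS.
Qed.

Lemma BwW k : k <= n -> Bw W k = B k.
Proof. by move=> kn; rewrite /Bw W_bpos inordK. Qed.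

Lemma nbW k : nb L n (Bw W) k = nb L n B k.
Proof. by rewrite /nb; case: ifP => // kn; rewrite BwW. Qed.

Lemma W_CsetE (k : 'I_n.+1) (j : 'I_L) : (j \in Cset W k) = (B k < j < nb L n B k).
Proof.
by rewrite (CsetE W_bo W_st W_co) nbW BwW // -ltnS.
Qed.

Lemma W_lab (k : 'I_n.+1) j : j \in Cset W k -> (W j).2 = k.
Proof.
rewrite W_CsetE => /andP[h1 h2]; rewrite ffunE /=.
rewrite (@lab_eq n B j k) ?inord_val //; first by rewrite -ltnS.
  exact: ltnW.
by move=> kn; move: h2; rewrite /nb kn.
Qed.

Lemma card_Cset (k : 'I_n.+1) : #|Cset W k| = nb L n B k - (B k).+1.
Proof.
have -> : #|Cset W k| = #|[pred j : 'I_L | B k < j < nb L n B k]|.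
  by apply: eq_card => j; rewrite W_CsetE.
rewrite (card_ord_pred L (fun j => B k < j < nb L n B k)) count_iota_int //.
  by rewrite /nb; case: ifP => kn; [apply: hB|apply: B_lt; rewrite -ltnS].
rewrite /nb; case: ifP => // kn; exact: ltnW (B_lt kn).
Qed.

End Forward.

Section Weights.
Variables (F : fieldType) (L n : nat) (p q : 'I_n.+1 -> F).
Local Open Scope ring_scope.
Hypothesis q0 : forall i, q i = 0.
Hypothesis p0 : forall i, p i != 0.

Definition Pk (k : 'I_n.+1) := \prod_(j < n.+1 | j != k) p j.

Lemma wbox_q0 (i k : 'I_n.+1) : wbox p q i k = if i == k then Pk k else 0.
Proof.
rewrite /wbox; case: eqVneq => [->|ne].
  apply: eq_bigr => j jk; rewrite leqnn; case: ifP => // /andP[h1 h2].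
  by have := leq_ltn_trans h2 h1; rewrite ltnn.
case: (ltngtP i k) => ik.
- rewrite (bigD1 k) /=; last by rewrite eq_sym.
  by rewrite ik leqnn /= q0 mul0r.
- rewrite (bigD1 ord0) /=; last by apply/eqP => e; move: ik; rewrite -e.
  by rewrite q0 mul0r.
- by move: ne; rewrite (val_inj ik) eqxx.
Qed.

Lemma wt_nz (w : word L n.+1) : wt p q w != 0 ->
  forall (k : 'I_n.+1) j, j \in Cset w k -> (w j).2 = k.
Proof.
move=> nz k j hj; case: (eqVneq (w j).2 k) => // ne; move: nz.
by rewrite /wt (bigD1 k) //= (bigD1 j) //= wbox_q0 (negbTE ne) !mul0r eqxx.
Qed.

Lemma wt_W B : incB n B -> B 0 = 0%N -> (B n < L)%N ->
  wt p q (wordB L n B) = \prod_(k < n.+1) Pk k ^+ (nb L n B k - (B k).+1)%N.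
Proof.
move=> hB B0 BnL; rewrite /wt; apply: eq_bigr => k _.
rewrite (eq_bigr (fun _ => Pk k)); last first.
  by move=> j hj; rewrite (W_lab hB B0 BnL hj) wbox_q0 eqxx.
by rewrite prodr_const card_Cset.
Qed.

Lemma prod_count (s : seq 'I_n.+1) (f : 'I_n.+1 -> F) :
  \prod_(i <- s) f i = \prod_(k < n.+1) f k ^+ count_mem k s.
Proof.
elim: s => [|x s IH]; first by rewrite big_nil big1 // => k _; rewrite expr0.
rewrite big_cons IH /=.
under [RHS]eq_bigr => k _ do rewrite exprD.
rewrite big_split /=; congr (_ * _).
rewrite (bigD1 x) //= eqxx expr1 big1 ?mulr1 // => k kx.
by rewrite eq_sym (negbTE kx) expr0.
Qed.

Lemma size_count (s : seq 'I_n.+1) : size s = (\sum_(k < n.+1) count_mem k s)%N.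
Proof.
elim: s => [|x s IH]; first by rewrite big1.
rewrite /= big_split /= -IH (bigD1 x) //= eqxx big1 // => k kx.
by rewrite eq_sym (negbTE kx).
Qed.

Lemma term_eq (s : seq 'I_n.+1) :
  (\prod_(i < n.+1) p i) ^+ size s * \prod_(i <- s) (p i)^-1 =
  \prod_(k < n.+1) Pk k ^+ count_mem k s.
Proof.
rewrite size_count expr_sum (prod_count s (fun i => (p i)^-1)) -big_split /=; apply: eq_bigr => k _.
rewrite -exprMn; congr (_ ^+ _).
by rewrite (bigD1 k) //= mulrAC mulfV // mul1r.
Qed.

End Weights.

Definition Bs (ss : seq nat) k := k + count (fun x => x < k) ss.

Lemma count_ltS k (ss : seq nat) :
  count (fun x => x < k.+1) ss = count (fun x => x < k) ss + count_mem k ss.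
Proof.
elim: ss => //= x s ->; rewrite ltnS.
case: (ltngtP x k) => h /=; lia.
Qed.

Section Sseq.
Variables L n : nat.
Variable ss : seq nat.
Hypotheses (nL : n.+1 <= L) (sz : size ss = L - n.+1) (al : all (fun x => x < n.+1) ss).

Lemma Bs_inc : incB n (Bs ss).
Proof.
move=> k k' kk' _; rewrite /Bs.
have : count (fun x => x < k) ss <= count (fun x => x < k') ss.
  by apply: sub_count => x /= h; apply: ltn_trans h kk'.
lia.
Qed.

Lemma Bs0 : Bs ss 0 = 0.
Proof. by rewrite /Bs; elim: ss. Qed.

Lemma Bs_lt : Bs ss n < L.
Proof. have := count_size (fun x => x < n) ss; rewrite /Bs; lia. Qed.

Lemma count_all : count (fun x => x < n.+1) ss = size ss.
Proof. by apply/eqP; rewrite -all_count. Qed.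

Lemma nb_Bs k : k <= n -> nb L n (Bs ss) k - (Bs ss k).+1 = count_mem k ss.
Proof.
move=> kn; rewrite /nb /Bs; case: ifP => kn'.
  rewrite count_ltS; lia.
have kn2 : k = n by lia.
subst k; have := count_all; rewrite count_ltS; lia.
Qed.

End Sseq.

Lemma Bs_inj L n (s1 s2 : (L - n.+1).-tuple 'I_n.+1) : n.+1 <= L ->
  sorted leq (map (@nat_of_ord _) s1) -> sorted leq (map (@nat_of_ord _) s2) ->
  wordB L n (Bs (map (@nat_of_ord _) s1)) = wordB L n (Bs (map (@nat_of_ord _) s2)) ->
  s1 = s2.
Proof.
move=> nL so1 so2 e.
have fs (s : (L - n.+1).-tuple 'I_n.+1) :
  size (map (@nat_of_ord _) s) = L - n.+1 /\ all (fun x => x < n.+1) (map (@nat_of_ord _) s).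
  split; first by rewrite size_map size_tuple.
  by apply/allP => x /mapP [y _ ->].
have [sz1 al1] := fs s1; have [sz2 al2] := fs s2.
have hb k : k <= n -> Bs (map (@nat_of_ord _) s1) k = Bs (map (@nat_of_ord _) s2) k.
  move=> kn.
  rewrite -(BwW (Bs_inc nL sz1 al1) (Bs_lt nL sz1 al1) kn).
  rewrite -(BwW (Bs_inc nL sz2 al2) (Bs_lt nL sz2 al2) kn).
  by rewrite e.
have hm x : x <= n -> count_mem x (map (@nat_of_ord _) s1) = count_mem x (map (@nat_of_ord _) s2).
  move=> xn; rewrite -(nb_Bs nL sz1 al1 xn) -(nb_Bs nL sz2 al2 xn) hb //.
  by rewrite /nb; case: ifP => // xn'; rewrite hb.
have pe : perm_eq (map (@nat_of_ord _) s1) (map (@nat_of_ord _) s2).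
  apply/allP => x; rewrite mem_cat => /orP[] /mapP[y _ ->] /=; by rewrite hm // -ltnS.
have := sorted_eq leq_trans anti_leq so1 so2 pe.
by move/(inj_map val_inj) => h; apply: val_inj.
Qed.

Fixpoint blocks (c : nat -> nat) t : seq nat :=
  if t is t'.+1 then blocks c t' ++ nseq (c t') t' else [::].

Lemma blocks_all c t : all (fun x => x < t) (blocks c t).
Proof.
elim: t => //= t IH; rewrite all_cat; apply/andP; split.
  by apply: sub_all IH => x h; apply: leqW.
by rewrite all_nseq ltnSn orbT.
Qed.

Lemma blocks_count c t k : k <= t -> count (fun x => x < k) (blocks c t) = size (blocks c k).
Proof.
elim: t => [|t IH] kt; first by move: kt; rewrite leqn0 => /eqP ->.
move: kt; rewrite leq_eqVlt => /orP[/eqP ->|kt].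
  by apply/eqP; rewrite -all_count blocks_all.
rewrite ltnS in kt.
by rewrite /= count_cat IH // count_nseq ltnNge kt /= mul0n addn0.
Qed.

Lemma blocks_sorted c t : sorted leq (blocks c t).
Proof.
rewrite (sorted_pairwise leq_trans).
elim: t => //= t IH; rewrite pairwise_cat IH /=; apply/andP; split.
  apply/allrelP => x y hx; rewrite mem_nseq => /andP[_ /eqP ->].
  by have := allP (blocks_all c t) x hx => /ltnW.
by elim: (c t) => //= m IHm; rewrite IHm andbT all_nseq leqnn orbT.
Qed.

Lemma construct L n B : n.+1 <= L -> incB n B -> B 0 = 0 -> B n < L ->
  exists s : (L - n.+1).-tuple 'I_n.+1,
    sorted leq (map (@nat_of_ord _) s) && (wordB L n (Bs (map (@nat_of_ord _) s)) == wordB L n B).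
Proof.
move=> nL hB B0 BnL.
pose c k := nb L n B k - (B k).+1.
pose ss := blocks c n.+1.
have Bge k : k <= n -> k <= B k.
  elim: k => // k IH kn; have := hB k k.+1 (ltnSn k) kn; have := IH (ltnW kn); lia.
have sizes t : t <= n -> size (blocks c t) = B t - t.
  elim: t => [|t IH] ht /=; first by rewrite B0.
  rewrite size_cat size_nseq IH ?(ltnW ht) // /c /nb ht.
  have := hB t t.+1 (ltnSn t) ht; have := Bge t (ltnW ht); lia.
have szs : size ss = L - n.+1.
  rewrite /ss /= size_cat size_nseq sizes // /c /nb ltnn; have := Bge n (leqnn n); lia.
have BsE k : k <= n -> Bs ss k = B k.
  move=> kn; rewrite /Bs blocks_count ?sizes //; last by apply: leqW.
  have := Bge k kn; lia.
have sz : size (map (@inord n) ss) == L - n.+1 by rewrite size_map szs.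
exists (Tuple sz).
have -> : map (@nat_of_ord _) (Tuple sz) = ss.
  rewrite /= -map_comp; apply: map_id_in => x hx /=.
  by rewrite inordK //; apply: (allP (blocks_all c n.+1)).
rewrite blocks_sorted /=; apply/eqP; apply: wordB_ext => k kn; exact: BsE.
Qed.

Local Open Scope ring_scope.

Unset Implicit Arguments.

Theorem proposition5p8 (F : fieldType) (L n : nat) :
  (1 <= n <= L)%N ->
  forall p q : 'I_n -> F,
  (forall i, q i = 0) ->
  (forall i, p i != 0) ->
  Zpart L p q =
  (\prod_(i < n) p i) ^+ (L - n) * hcompl (L - n) (fun i => (p i)^-1).
Proof.
move=> /andP[n1 nL] p q q0 p0.
case: n n1 nL p q q0 p0 => [//|n] _ nL p q q0 p0.
pose A := [set s : (L - n.+1)%N.-tuple 'I_n.+1 | sorted leq (map (@nat_of_ord _) s)].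
pose h (s : (L - n.+1)%N.-tuple 'I_n.+1) := wordB L n (Bs (map (@nat_of_ord _) s)).
have fs (s : (L - n.+1)%N.-tuple 'I_n.+1) :
  size (map (@nat_of_ord _) s) = (L - n.+1)%N /\ all (fun x => (x < n.+1)%N) (map (@nat_of_ord _) s).
  split; first by rewrite size_map size_tuple.
  by apply/allP => x /mapP [y _ ->].
rewrite /hcompl GRing.mulr_sumr.
have E1 : \sum_(s : (L - n.+1)%N.-tuple 'I_n.+1 | sorted leq (map (@nat_of_ord _) s))
    (\prod_(i < n.+1) p i) ^+ (L - n.+1)%N * \prod_(i <- s) (p i)^-1
  = \sum_(s in A) wt p q (h s).
  apply: eq_big => [s|s hs]; first by rewrite inE.
  have [sz al] := fs s.
  rewrite -{1}(size_tuple s) term_eq // /h (wt_W p q0 (Bs_inc nL sz al) (Bs0 _) (Bs_lt nL sz al)).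
  apply: eq_bigr => k _; rewrite nb_Bs // ?count_map; last by rewrite -ltnS.
  by congr (_ ^+ _).
rewrite E1 -big_imset; last first.
  by move=> s1 s2; rewrite !inE => h1 h2 e; apply: Bs_inj h1 h2 e.
rewrite /Zpart [LHS](bigID (mem (h @: A))) /= [X in _ + X]big1 ?GRing.addr0.
  apply: eq_bigl => w.
  case: (boolP (w \in h @: A)) => hw; last by rewrite andbF.
  rewrite andbT; move/imsetP: hw => [s hs ->].
  have [sz al] := fs s.
  have hB := Bs_inc nL sz al; have B0 := Bs0 (map (@nat_of_ord _) s).
  have BnL := Bs_lt nL sz al.
  by rewrite /Omega (W_bo hB BnL) (W_co hB B0 BnL) (W_st L hB B0).
move=> w /andP[/andP[/andP[bo co] st] nin].
case: (eqVneq (wt p q w) 0) => // nz; exfalso; move/negP: nin; apply.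
have gw := good_word bo st co (wt_nz q0 nz).
have [s /andP[hs /eqP e]] := construct nL (Bw_inc bo st co) (Bw0 bo st) (Bw_lt bo n).
apply/imsetP; exists s; first by rewrite inE.
by rewrite /h e.
Qed.
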